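(* Let $\mathbb F=\mathbb F_0(\omega)$ be a degree-$2$ extension field of a field $\mathbb F_0$. Let $M$ be a vertically $5$-connected $\mathbb F$-represented matroid of rank $r$ and let $e$ be a nonloop of $M$ such that $M/\!\!/e\approx M\binom{u_0+\omega v_0}{R}$ for some $u_0,v_0\in\mathbb F_0^{E(M)}$ and $R\in\mathbb F_0^{[r-2]\times E(M)}$. Then there are matrices $P,Q\in\mathbb F_0^{[2]\times E(M)}$ such that $M\approx M\binom{P+\omega Q}{R}$ and either (1) there is a partition $(I,J)$ of $E(M)$ such that $\mathrm{rank}(R[I])+\mathrm{rank}(Q[J])\le 1$, or (2) the matrix $$W^+=\begin{pmatrix} I_2 & 0 & -\omega I_2 & P\\ 0 & I_2 & I_2 & Q\\ 0&0&0&R\end{pmatrix},$$ whose columns are indexed by $S\cup X\cup E(M)$ where the first four columns form a set $S$ and the next two columns form a set $X$ (with rows grouped as $2,2,r-2$), satisfies $\kappa_{M(W^+)}(S\cup X,K)=4$ for every set $K\subseteq E(M)$ with $r_M(K)\ge 4$.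
   Context: Represented matroids: an $\mathbb F$-represented matroid on $E$ is a pair $(U,E)$ with $U$ a subspace of $\mathbb F^E$; rank $r(X)=\dim U[X]$ ($U[X]$ the projection to $\mathbb F^X$). For a matrix $A$ with column set $E$, $M(A)=(\mathrm{rowspace}(A),E)$; deletion, contraction (via duality $(U,E)^*=(U^\perp,E)$, $M/X=(M^*\setminus X)^*$) and minors are as usual. $M(A_1)\approx M(A_2)$ means some matrix row-equivalent to $A_1$ is obtained from $A_2$ by scaling columns by nonzero scalars. $[m]=\{1,\dots,m\}$; $A[I]$ is the submatrix on columns $I$; $\binom{X}{Y}$ denotes vertical stacking; $I_k$ is the identity matrix. For a nonloop $e$ of a represented matroid $M$, $M/\!\!/e$ denotes $M'/e'$, where $M'$ is obtained from $M$ by adding an element $e'$ parallel to $e$ (so $E(M/\!\!/e)=E(M)$ and $e$ is a loop of it). $\lambda_M(Z)=r_M(Z)+r_M(E(M)-Z)-r(M)$; for disjoint $A,B$, $\kappa_M(A,B)=\min\{\lambda_M(Z): A\subseteq Z\subseteq E(M)-B\}$. A set $A$ is vertically $k$-separating if $\lambda_M(A)<k$ and $\min(r_M(A),r_M(E(M)-A))\ge k$; $M$ is vertically $k$-connected if it has no vertically $k'$-separating set for any $k'\le k$. *)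

(* Defs.v *)
From HB Require Import structures.
From mathcomp Require Import all_boot all_order all_algebra all_field.
Set Implicit Arguments. Unset Strict Implicit. Unset Printing Implicit Defensive.
Import GRing.Theory.
Local Open Scope ring_scope.

(* A represented matroid (U, E) with E = 'I_n is given by a matrix A whose
   row space is U; M(A) = (rowspace A, 'I_n). *)

Section RepMatroid.
Variable K : fieldType.

(* projection U[X], realised by zeroing the columns outside X
   (same dimension as the projection to K^X) *)
Definition colrestr m n (A : 'M[K]_(m, n)) (X : {set 'I_n}) : 'M[K]_(m, n) :=
  A *m diag_mx (\row_j (j \in X)%:R).

Definition mrank m n (A : 'M[K]_(m, n)) (X : {set 'I_n}) : nat :=
  \rank (colrestr A X).

Definition mlambda m n (A : 'M[K]_(m, n)) (Z : {set 'I_n}) : nat :=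
  (mrank A Z + mrank A (~: Z) - \rank A)%N.

Definition mkappa m n (A : 'M[K]_(m, n)) (S T : {set 'I_n}) : nat :=
  \big[minn/mlambda A S]_(Z : {set 'I_n} | (S \subset Z) && (Z \subset ~: T))
     mlambda A Z.

Definition vert_sep m n (A : 'M[K]_(m, n)) (k : nat) (Z : {set 'I_n}) : Prop :=
  (mlambda A Z < k)%N /\ (k <= minn (mrank A Z) (mrank A (~: Z)))%N.

Definition vert_conn m n (A : 'M[K]_(m, n)) (k : nat) : Prop :=
  forall k' : nat, (k' <= k)%N -> forall Z : {set 'I_n}, ~ vert_sep A k' Z.

Definition nonloop m n (A : 'M[K]_(m, n)) (e : 'I_n) : Prop :=
  mrank A [set e] = 1%N.

(* duality: (U, E)^* = (U^perp, E) *)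
Definition dualmx m n (A : 'M[K]_(m, n)) : 'M[K]_n := kermx A^T.

Definition delete_last m n (A : 'M[K]_(m, n.+1)) : 'M[K]_(m, n) :=
  colsub (lift ord_max) A.

(* contraction M / f = (M^* \ f)^*, for f the last element *)
Definition contract_last m n (A : 'M[K]_(m, n.+1)) : 'M[K]_n :=
  dualmx (delete_last (dualmx A)).

Definition par_ext m n (A : 'M[K]_(m, n)) (e : 'I_n) : 'M[K]_(m, n.+1) :=
  \matrix_(i, j) A i (oapp id e (unlift ord_max j)).

Definition pcontract m n (A : 'M[K]_(m, n)) (e : 'I_n) : 'M[K]_n :=
  contract_last (par_ext A e).

Definition mapprox m k n (A1 : 'M[K]_(m, n)) (A2 : 'M[K]_(k, n)) : Prop :=
  exists d : 'rV[K]_n, (forall j, d 0 j != 0) /\ (A1 == A2 *m diag_mx d)%MS.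

End RepMatroid.

Section Ext.
Variables (F0 : fieldType) (L : fieldExtType F0).

Definition inj_mx m n (B : 'M[F0]_(m, n)) : 'M[L]_(m, n) := map_mx (fun a => a%:A) B.

Definition stackPQR (w : L) r n (P Q : 'M[F0]_(2, n)) (R : 'M[F0]_(r, n))
  : 'M[L]_(2 + r, n) :=
  col_mx (inj_mx P + w *: inj_mx Q) (inj_mx R).

Definition Wplus (w : L) r n (P Q : 'M[F0]_(2, n)) (R : 'M[F0]_(r, n))
  : 'M[L]_(2 + 2 + r, (4 + 2) + n) :=
  row_mx
    (col_mx (row_mx (1%:M : 'M[L]_(2 + 2))
                    (col_mx ((- w)%:M : 'M[L]_2) (1%:M : 'M[L]_2)))
            (0 : 'M[L]_(r, 4 + 2)))
    (col_mx (col_mx (inj_mx P) (inj_mx Q)) (inj_mx R)).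

End Ext.

(* Main.v *)
Require Import Defs.
From HB Require Import structures.
From mathcomp Require Import all_boot all_order all_algebra all_field.
From mathcomp Require Import ring zify.
From Stdlib Require Import Classical.
Set Implicit Arguments. Unset Strict Implicit. Unset Printing Implicit Defensive.
Import GRing.Theory.
Local Open Scope ring_scope.


Section Coord.
Variables (F0 : fieldType) (L : fieldExtType F0) (w : L).
Hypothesis hdim : \dim {:L} = 2%N.
Hypothesis hgen : <<1%VS; w>>%VS = fullv.

Lemma w_notin1 : w \notin (1%VS : {vspace L}).
Proof.
apply/negP => /Fadjoin_idP h; move: hdim; by rewrite -hgen h dimv1.
Qed.

Definition XB : 2.-tuple L := [tuple w; 1].

Lemma XB_free : free XB.
Proof.
rewrite /XB /= free_cons span_seq1 seq1_free oner_neq0 andbT.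
exact: w_notin1.
Qed.

Lemma XB_span v : v \in <<XB>>%VS.
Proof.
have -> : <<XB>>%VS = fullv.
  apply/eqP; rewrite eqEdim subvf /=.
  by move: XB_free => /eqnP ->; rewrite hdim.
exact: memvf.
Qed.

Definition cw (c : L) : F0 := coord XB 0 c.
Definition c1 (c : L) : F0 := coord XB 1 c.

Lemma cdec c : c = (c1 c)%:A + cw c *: w.
Proof.
rewrite {1}(coord_span (XB_span c)) big_ord_recl big_ord_recl big_ord0 addr0.
rewrite addrC /cw /c1 /=.
have -> : lift ord0 ord0 = 1 :> 'I_2 by apply: val_inj.
by have -> : ord0 = 0 :> 'I_2 by apply: val_inj.
Qed.

Lemma coord_1 j : coord XB j 1 = (1 == j)%:R.
Proof. exact: (coord_free 1 j XB_free). Qed.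
Lemma coord_w j : coord XB j w = (0 == j)%:R.
Proof. exact: (coord_free 0 j XB_free). Qed.

Lemma cw_alg a : cw a%:A = 0.
Proof. by rewrite /cw linearZ /= coord_1 mulr0. Qed.
Lemma c1_alg a : c1 a%:A = a.
Proof. by rewrite /c1 linearZ /= coord_1 mulr1. Qed.
Lemma cw_w a : cw (a *: w) = a.
Proof. by rewrite /cw linearZ /= coord_w mulr1. Qed.
Lemma c1_w a : c1 (a *: w) = 0.
Proof. by rewrite /c1 linearZ /= coord_w mulr0. Qed.
Lemma cwD x y : cw (x + y) = cw x + cw y. Proof. by rewrite /cw linearD. Qed.
Lemma c1D x y : c1 (x + y) = c1 x + c1 y. Proof. by rewrite /c1 linearD. Qed.
Lemma cwZ a x : cw (a *: x) = a * cw x. Proof. by rewrite /cw linearZ. Qed.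
Lemma c1Z a x : c1 (a *: x) = a * c1 x. Proof. by rewrite /c1 linearZ. Qed.
Lemma cw0 : cw 0 = 0. Proof. by rewrite /cw linear0. Qed.
Lemma c10 : c1 0 = 0. Proof. by rewrite /c1 linear0. Qed.
End Coord.


Section PC.
Variable K : fieldType.

Lemma dual2 m n (M : 'M[K]_(m, n)) : (kermx (kermx M^T)^T <= M)%MS.
Proof.
have sub : (M <= kermx (kermx M^T)^T)%MS.
  apply/sub_kermxP; apply: (can_inj (@trmxK _ _ _)).
  by rewrite trmx_mul trmxK mulmx_ker trmx0.
have := mxrank_leqif_sup sub; case => _ <-.
rewrite !mxrank_ker mxrank_tr mxrank_ker mxrank_tr subKn ?rank_leq_col //.
Qed.

Definition ext n (y : 'rV[K]_n) : 'rV[K]_n.+1 :=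
  \row_j oapp (fun k => y 0 k) 0 (unlift ord_max j).

Lemma ext_mul n p (y : 'rV[K]_n) (Z : 'M[K]_(p, n.+1)) :
  y *m (colsub (lift ord_max) Z)^T = ext y *m Z^T.
Proof.
apply/rowP => i; rewrite !mxE big_ord_recr /= !mxE unlift_none mul0r addr0.
apply: eq_bigr => k _; rewrite !mxE.
have -> : widen_ord (leqnSn n) k = lift ord_max k by apply: val_inj; rewrite /= /bump leqNgt ltn_ord add0n.
by rewrite liftK.
Qed.

Lemma ext_sub m n (A : 'M[K]_(m, n)) e (y : 'rV_n) :
  (ext y <= par_ext A e)%MS = (y <= A)%MS && (y 0 e == 0).
Proof.
apply/idP/idP.
  case/submxP => t ht.
  have hk : forall k, y 0 k = (t *m A) 0 k.
    move=> k; have := congr1 (fun M : 'rV_n.+1 => M 0 (lift ord_max k)) ht.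
    rewrite !mxE liftK /= => ->; apply: eq_bigr => i _; rewrite !mxE liftK //.
  have hy : y = t *m A by apply/rowP => k; rewrite hk.
  apply/andP; split; first by rewrite hy submxMl.
  have := congr1 (fun M : 'rV_n.+1 => M 0 ord_max) ht; rewrite !mxE unlift_none /= => h0.
  by rewrite hk !mxE; apply/eqP; rewrite [RHS]h0; apply: eq_bigr => i _; rewrite !mxE unlift_none.
case/andP => /submxP [t ht] /eqP he.
apply/submxP; exists t; apply/rowP => j; rewrite !mxE.
case: unliftP => [k ->|->]; rewrite ?liftK ?unlift_none /=.
  by rewrite ht mxE; apply: eq_bigr => i _; rewrite !mxE liftK.
by rewrite -[LHS]he ht mxE; apply: eq_bigr => i _; rewrite !mxE unlift_none.
Qed.

Lemma pcontractP m n (A : 'M[K]_(m, n)) e (y : 'rV_n) :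
  (y <= pcontract A e)%MS = (y <= A)%MS && (y 0 e == 0).
Proof.
rewrite /pcontract /contract_last /dualmx /delete_last -ext_sub.
apply/idP/idP.
  move/sub_kermxP; rewrite ext_mul => h.
  apply: submx_trans (dual2 _).
  by apply/sub_kermxP.
move=> h; apply/sub_kermxP; rewrite ext_mul.
have : (ext y <= kermx (kermx (par_ext A e)^T)^T)%MS.
  apply: submx_trans h _.
  apply/sub_kermxP; apply: (can_inj (@trmxK _ _ _)).
  by rewrite trmx_mul trmxK mulmx_ker trmx0.
by move/sub_kermxP.
Qed.
End PC.


Section CR.
Variable K : fieldType.

Lemma colrestrE m n (A : 'M[K]_(m, n)) X :
  colrestr A X = \matrix_(i, j) (if j \in X then A i j else 0).
Proof.
apply/matrixP => i j; rewrite /colrestr mul_mx_diag !mxE.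
by case: (j \in X); rewrite ?mulr1 ?mulr0.
Qed.

Lemma colrestrM m p n (B : 'M[K]_(p, m)) (A : 'M[K]_(m, n)) X :
  colrestr (B *m A) X = B *m colrestr A X.
Proof. by rewrite /colrestr mulmxA. Qed.

Lemma colrestr_col m1 m2 n (A1 : 'M[K]_(m1, n)) (A2 : 'M[K]_(m2, n)) X :
  colrestr (col_mx A1 A2) X = col_mx (colrestr A1 X) (colrestr A2 X).
Proof. by rewrite /colrestr mul_col_mx. Qed.

Lemma colrestrD m n (A1 A2 : 'M[K]_(m, n)) X :
  colrestr (A1 + A2) X = colrestr A1 X + colrestr A2 X.
Proof. by rewrite /colrestr mulmxDl. Qed.

Lemma colrestrZ m n a (A : 'M[K]_(m, n)) X :
  colrestr (a *: A) X = a *: colrestr A X.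
Proof. by rewrite /colrestr scalemxAl. Qed.

Lemma colrestrT m n (A : 'M[K]_(m, n)) : colrestr A setT = A.
Proof. by apply/matrixP => i j; rewrite colrestrE mxE in_setT. Qed.

Lemma colrestr0 m n (A : 'M[K]_(m, n)) : colrestr A set0 = 0.
Proof. by apply/matrixP => i j; rewrite colrestrE !mxE in_set0. Qed.

Lemma colrestr_sub m n (A : 'M[K]_(m, n)) (X Y : {set 'I_n}) : X \subset Y ->
  colrestr A X = colrestr (colrestr A Y) X.
Proof.
move=> sXY; apply/matrixP => i j; rewrite !colrestrE !mxE.
by case: ifP => // jX; rewrite (subsetP sXY _ jX).
Qed.

Lemma mrank_le m n (A : 'M[K]_(m, n)) (X Y : {set 'I_n}) : X \subset Y ->
  (mrank A X <= mrank A Y)%N.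
Proof. by move=> sXY; rewrite /mrank (colrestr_sub A sXY) mxrankM_maxl. Qed.

Lemma mrank_rank m n (A : 'M[K]_(m, n)) X : (mrank A X <= \rank A)%N.
Proof. exact: mxrankM_maxl. Qed.

Lemma colrestr_split m n (A : 'M[K]_(m, n)) X :
  A = colrestr A X + colrestr A (~: X).
Proof.
apply/matrixP => i j; rewrite !colrestrE !mxE in_setC.
by case: (j \in X); rewrite ?addr0 ?add0r.
Qed.

Lemma mrank_split m n (A : 'M[K]_(m, n)) X :
  (\rank A <= mrank A X + mrank A (~: X))%N.
Proof. by rewrite {1}(colrestr_split A X) mxrank_add. Qed.

Lemma colrestr_submx m1 m2 n (A1 : 'M[K]_(m1, n)) (A2 : 'M[K]_(m2, n)) X :
  (A1 <= A2)%MS -> (colrestr A1 X <= colrestr A2 X)%MS.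
Proof. exact: submxMr. Qed.

Lemma mrank_eqmx m1 m2 n (A1 : 'M[K]_(m1, n)) (A2 : 'M[K]_(m2, n)) X :
  (A1 == A2)%MS -> mrank A1 X = mrank A2 X.
Proof.
case/andP => h1 h2; apply/eqP; rewrite eqn_leq.
by rewrite !mxrankS ?colrestr_submx.
Qed.

Lemma diag_free n (d : 'rV[K]_n) : (forall j, d 0 j != 0) -> row_free (diag_mx d).
Proof.
move=> hd; rewrite row_free_unit unitmxE det_diag unitfE.
by apply/prodf_neq0 => j _.
Qed.

Lemma mrank_diag m n (A : 'M[K]_(m, n)) (d : 'rV[K]_n) (X : {set 'I_n}) : (forall j, d 0 j != 0) ->
  mrank (A *m diag_mx d) X = mrank A X.
Proof.
move=> hd; rewrite /mrank.
have -> : colrestr (A *m diag_mx d) X = colrestr A X *m diag_mx d.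
  by apply/matrixP => i j; rewrite !colrestrE !mul_mx_diag !mxE; case: ifP; rewrite ?mul0r.
by rewrite mxrankMfree ?diag_free.
Qed.

Lemma rank_col_le m1 m2 n (A1 : 'M[K]_(m1, n)) (A2 : 'M[K]_(m2, n)) :
  (\rank (col_mx A1 A2) <= \rank A1 + \rank A2)%N.
Proof. by rewrite -addsmxE; case: (mxrank_adds_leqif A1 A2). Qed.

Lemma submx_eq_rank m1 m2 n (A1 : 'M[K]_(m1, n)) (A2 : 'M[K]_(m2, n)) :
  (A1 <= A2)%MS -> (\rank A2 <= \rank A1)%N -> (A1 == A2)%MS.
Proof.
move=> s12 r21; apply/andP; split=> //.
by case: (mxrank_leqif_sup s12) => _ <-; rewrite eqn_leq r21 mxrankS.
Qed.
End CR.

Section Inj.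
Variables (F0 : fieldType) (L : fieldExtType F0).

Lemma inj_rank m n (B : 'M[F0]_(m, n)) : \rank (inj_mx L B) = \rank B.
Proof. exact: (mxrank_map (in_alg L) B). Qed.

Lemma colrestr_inj m n (B : 'M[F0]_(m, n)) X :
  colrestr (inj_mx L B) X = inj_mx L (colrestr B X).
Proof.
apply/matrixP => i j; rewrite !colrestrE !mxE.
by case: ifP; rewrite // scale0r.
Qed.

Lemma inj_col m1 m2 n (B1 : 'M[F0]_(m1, n)) (B2 : 'M[F0]_(m2, n)) :
  inj_mx L (col_mx B1 B2) = col_mx (inj_mx L B1) (inj_mx L B2).
Proof. exact: map_col_mx. Qed.

Lemma inj_add m n (B1 B2 : 'M[F0]_(m, n)) :
  inj_mx L (B1 + B2) = inj_mx L B1 + inj_mx L B2.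
Proof. exact: (map_mxD (in_alg L)). Qed.

Lemma inj_mul m p n (B1 : 'M[F0]_(m, p)) (B2 : 'M[F0]_(p, n)) :
  inj_mx L (B1 *m B2) = inj_mx L B1 *m inj_mx L B2.
Proof. exact: (map_mxM (in_alg L)). Qed.

Lemma inj_scale m n a (B : 'M[F0]_(m, n)) :
  inj_mx L (a *: B) = a%:A *: inj_mx L B.
Proof. exact: (map_mxZ (in_alg L)). Qed.

Lemma inj0 m n : inj_mx L (0 : 'M[F0]_(m, n)) = 0.
Proof. by apply/matrixP => i j; rewrite !mxE scale0r. Qed.
End Inj.


Section Step.
Variables (F0 : fieldType) (L : fieldExtType F0) (w : L).
Hypothesis hdim : \dim {:L} = 2%N.
Hypothesis hgen : <<1%VS; w>>%VS = fullv.

Notation cw := (cw w).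
Notation c1 := (c1 w).
Notation inj := (inj_mx L).

Let cwA := cw_alg hdim hgen.
Let c1A := c1_alg hdim hgen.
Let cwW := cw_w hdim hgen.
Let c1W := c1_w hdim hgen.

Lemma cdec' c : c = (c1 c)%:A + cw c *: w.
Proof. exact: cdec. Qed.

Lemma exists_rel k p n (X : 'M[F0]_(k, n)) (D : 'M[F0]_(p, n)) :
  (\rank (col_mx X D) < \rank D + k)%N ->
  exists c : 'rV_k, c != 0 /\ (c *m X <= D)%MS.
Proof.
move=> hlt; case: (ltnP (\rank X) k) => hX.
  have : kermx X != 0 by rewrite -mxrank_eq0 mxrank_ker -lt0n subn_gt0.
  case/rowV0Pn => v /sub_kermxP vX v0; exists v; split => //.
  by rewrite vX sub0mx.
have : (X :&: D)%MS != 0.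
  have h := mxrank_sum_cap X D; rewrite -addsmxE in hlt.
  rewrite -mxrank_eq0 -lt0n; lia.
case/rowV0Pn => v vc v0; exists (v *m pinvmx X).
have vX : (v <= X)%MS by apply: submx_trans vc (capmxSl _ _).
rewrite mulmxKpV //; split; last by apply: submx_trans vc (capmxSr _ _).
by apply: contraNneq v0 => h; rewrite -(mulmxKpV vX) h mul0mx.
Qed.

Lemma mulw_alg (b : F0) : w * b%:A = b *: w.
Proof. by rewrite mulr_algr. Qed.

Lemma step k p n (P Q : 'M[F0]_(k, n)) (D : 'M[F0]_(p, n)) :
  (\rank (col_mx (col_mx P Q) D) < \rank D + (k + k))%N ->
  exists alpha : 'rV[L]_k, alpha != 0 /\
  exists f : 'rV[F0]_n, (f <= col_mx P Q)%MS /\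
  exists z : 'rV[F0]_p,
    alpha *m (inj P + w *: inj Q) = inj f + w *: inj (z *m D).
Proof.
move/exists_rel => [c [c0 cX]].
set cP := lsubmx c; set cQ := rsubmx c.
have hc : c *m col_mx P Q = cP *m P + cQ *m Q by rewrite -{1}(hsubmxK c) mul_row_col.
set s := c1 (w * w); set t := cw (w * w).
have hww : w * w = s%:A + t *: w by apply: (cdec hdim hgen).
set a := cQ - t *: cP.
exists (inj a + w *: inj cP); split.
  apply: contraNneq c0 => h0.
  have hj : forall j, cP 0 j = 0 /\ cQ 0 j = 0.
    move=> j; have := congr1 (fun M : 'rV[L]_k => M 0 j) h0.
    rewrite !mxE mulw_alg => e0.
    have e1 := congr1 cw e0; have e2 := congr1 c1 e0.
    rewrite cwD cwA cwW add0r cw0 in e1.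
    rewrite c1D c1A c1W addr0 c10 in e2.
    by move: e2; rewrite e1 mulr0 subr0.
  apply/eqP; rewrite -(hsubmxK c); apply/rowP => j; rewrite !mxE.
  by case: splitP => j' _; [exact: (hj j').1 | exact: (hj j').2].
exists (a *m P + s *: (cP *m Q)); split.
  apply: addmx_sub; first by apply: submx_trans (submxMl _ _) _; rewrite -[P]/(P) ; apply/submxP; exists (row_mx 1%:M 0); rewrite mul_row_col mul1mx mul0mx addr0.
  apply: scalemx_sub; apply: submx_trans (submxMl _ _) _.
  by apply/submxP; exists (row_mx 0 1%:M); rewrite mul_row_col mul1mx mul0mx add0r.
exists (c *m col_mx P Q *m pinvmx D); rewrite mulmxKpV // hc.
have hQ : cQ = a + t *: cP by rewrite /a subrK.
clearbody a s t cP cQ; subst cQ.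
rewrite !inj_add !inj_scale !inj_mul.
rewrite mulmxDl !mulmxDr -!scalemxAl -!scalemxAr inj_add inj_scale mulmxDl -scalemxAl.
move: (inj a *m inj P) (inj a *m inj Q) (inj cP *m inj P) (inj cP *m inj Q) => u1 u2 u3 u4.
rewrite scalerA hww scalerDl -mulw_alg -scalerA !scalerDr.
rewrite -!addrA; congr (_ + _).
by apply/rowP => j; rewrite !mxE; ring.
Qed.
End Step.


Section RowR.
Variable K : fieldType.
Lemma colrestr_row m p1 p2 (A : 'M[K]_(m, p1)) (B : 'M[K]_(m, p2)) (X : {set 'I_(p1 + p2)}) :
  colrestr (row_mx A B) X =
  row_mx (colrestr A [set j | lshift p2 j \in X]) (colrestr B [set k | rshift p1 k \in X]).
Proof.
  rewrite -[LHS]hsubmxK !colrestrE; congr row_mx; apply/matrixP => i k;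
  by rewrite !(row_mxEl, row_mxEr, mxE) inE.
Qed.
End RowR.

Section WP.
Variables (F0 : fieldType) (L : fieldExtType F0) (w : L).
Notation inj := (inj_mx L).
Variables (r n : nat) (P Q : 'M[F0]_(2, n)) (R : 'M[F0]_(r - 2, n)).

Definition NN : 'M[L]_(2 + 2 + (r - 2), n) := col_mx (col_mx (inj P) (inj Q)) (inj R).
Definition T6 : 'M[L]_(2 + 2, 4 + 2) :=
  row_mx (1%:M : 'M[L]_(2 + 2)) (col_mx ((- w)%:M : 'M[L]_2) (1%:M : 'M[L]_2)).

Lemma WplusE : Wplus w P Q R = row_mx (col_mx T6 0) NN.
Proof. by []. Qed.

Definition S6 : {set 'I_((4 + 2) + n)} := [set j : 'I_((4 + 2) + n) | (j < 4 + 2)%N].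

Lemma W3 : (\rank (Wplus w P Q R) <= 4 + \rank R)%N.
Proof.
rewrite WplusE /NN -block_mxEh block_mxEv.
apply: leq_trans (rank_col_le _ _) _.
by rewrite rank_row_0mx inj_rank leq_add2r rank_leq_row.
Qed.

Lemma W2 (Z : {set 'I_((4 + 2) + n)}) : S6 \subset Z ->
  (\rank (colrestr NN (~: [set k | rshift (4 + 2) k \in Z])) <= mrank (Wplus w P Q R) (~: Z))%N.
Proof.
move=> sZ; rewrite /mrank WplusE colrestr_row.
have -> : [set j | lshift n j \in ~: Z] = set0.
  apply/setP => j; rewrite !inE; apply/negbTE; rewrite negbK.
  by apply: (subsetP sZ); rewrite inE /= ltn_ord.
rewrite colrestr0 rank_row_0mx.
have -> : [set k | rshift (4 + 2) k \in ~: Z] = ~: [set k | rshift (4 + 2) k \in Z].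
  by apply/setP => k; rewrite !inE.
by [].
Qed.

Lemma W1 (Z : {set 'I_((4 + 2) + n)}) : S6 \subset Z ->
  (4 + \rank (colrestr R [set k | rshift (4 + 2) k \in Z]) <= mrank (Wplus w P Q R) Z)%N.
Proof.
move=> sZ; rewrite /mrank WplusE colrestr_row.
have -> : [set j | lshift n j \in Z] = setT.
  apply/setP => j; rewrite !inE.
  by apply: (subsetP sZ); rewrite inE /= ltn_ord.
rewrite colrestrT /NN colrestr_col colrestr_col !colrestr_inj.
set Y := [set k | rshift (4 + 2) k \in Z].
set Nt := col_mx (inj (colrestr P Y)) (inj (colrestr Q Y)).
set Nb := inj (colrestr R Y).
pose C : 'M[L]_((4 + 2) + n, (2 + 2) + n) :=
  col_mx (col_mx (row_mx 1%:M (- Nt)) 0) (row_mx 0 1%:M).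
apply: leq_trans (mxrankM_maxl _ C).
have -> : row_mx (col_mx T6 0) (col_mx Nt Nb) *m C = block_mx 1%:M 0 0 Nb.
  rewrite /C mul_row_col mul_col_mx /T6 mul_row_col mul1mx mul_mx_row mulmx0 mulmx1.
  rewrite addr0 mul0mx mulmx0 -[X in col_mx _ X]row_mx0 -block_mxEv.
  rewrite -[X in row_mx X _]col_mx0 -block_mxEh add_block_mx.
  by rewrite addr0 addNr !add0r.
by rewrite rank_diag_block_mx mxrank1 inj_rank.
Qed.
End WP.


Section H.
Variable K : fieldType.
Lemma sub_colmxl m1 m2 n (A : 'M[K]_(m1, n)) (B : 'M[K]_(m2, n)) : (A <= col_mx A B)%MS.
Proof. by rewrite -addsmxE addsmxSl. Qed.
Lemma sub_colmxr m1 m2 n (A : 'M[K]_(m1, n)) (B : 'M[K]_(m2, n)) : (B <= col_mx A B)%MS.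
Proof. by rewrite -addsmxE addsmxSr. Qed.
Lemma rank_col3 m1 m2 m3 n (a : 'M[K]_(m1, n)) (b : 'M[K]_(m2, n)) (c : 'M[K]_(m3, n)) :
  (\rank (col_mx (col_mx a b) c) <= \rank (col_mx a c) + \rank b)%N.
Proof.
apply: leq_trans (rank_col_le _ _); apply: mxrankS.
rewrite !col_mx_sub !sub_colmxr /= andbT.
by rewrite (submx_trans (sub_colmxl a c)) ?sub_colmxl // (submx_trans (sub_colmxr a c)) ?sub_colmxl.
Qed.
End H.

Lemma ar1 r a b : (r <= a + b -> a <= 2 -> r - 2 <= b)%N. Proof. lia. Qed.
Lemma ar2 r rho rY : (4 <= r -> rho + rY <= r + 1 -> rho < r - 2 + (2 + 2))%N. Proof. lia. Qed.
Lemma ar3 r rho rY : (r < rho -> rho + rY <= r + 1 -> rY = 0)%N. Proof. lia. Qed.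
Lemma ar4 r x d y : (r <= x -> x <= d + y -> y <= 1 -> r - 1 <= d)%N. Proof. lia. Qed.
Lemma ar5 r rho rho2 d : (4 <= r -> rho2 <= rho -> rho <= r -> r - 1 <= d -> rho2 < d + (1 + 1))%N. Proof. lia. Qed.
Lemma ar6 r rho rY : (r <= rho -> rho + rY <= r + 1 -> rY <= 1)%N. Proof. lia. Qed.


Section M.
Variables (F0 : fieldType) (L : fieldExtType F0) (w : L).
Hypothesis hdim : \dim {:L} = 2%N.
Hypothesis hgen : <<1%VS; w>>%VS = fullv.
Notation cw := (cw w).
Notation c1 := (c1 w).
Notation inj := (inj_mx L).

Lemma recon p n (M : 'M[L]_(p, n)) : inj (map_mx c1 M) + w *: inj (map_mx cw M) = M.
Proof.
apply/matrixP => i j; rewrite !mxE [RHS](cdec hdim hgen).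
by rewrite mulr_algr.
Qed.

Lemma colrestr_map p n (M : 'M[L]_(p, n)) X :
  colrestr (map_mx cw M) X = map_mx cw (colrestr M X).
Proof.
by apply/matrixP => i j; rewrite !colrestrE !mxE; case: ifP; rewrite ?cw0.
Qed.

Lemma map_cw_inj p n (f : 'M[F0]_(p, n)) : map_mx cw (inj f) = 0.
Proof. by apply/matrixP => i j; rewrite !mxE (cw_alg hdim hgen). Qed.

Lemma colrestrN m n (A : 'M[L]_(m, n)) X : colrestr (- A) X = - colrestr A X.
Proof. by rewrite /colrestr mulNmx. Qed.

Lemma subB_sub m1 m2 n (A B : 'M[L]_(m1, n)) (C : 'M[L]_(m2, n)) :
  (A <= C)%MS -> (B <= C)%MS -> (A - B <= C)%MS.
Proof. by move=> hA hB; apply: addmx_sub => //; rewrite eqmx_opp. Qed.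

Lemma rank_map_col1 n (a b : 'rV[L]_n) (f : 'rV[F0]_n) :
  a = inj f -> (\rank (map_mx cw (col_mx a b)) <= 1)%N.
Proof.
move=> ->; rewrite map_col_mx map_cw_inj.
by apply: leq_trans (rank_col_le _ _) _; rewrite mxrank0 rank_leq_row.
Qed.

Lemma rank_map_col0 n (a b : 'rV[L]_n) (f f2 : 'rV[F0]_n) :
  a = inj f -> b = inj f2 -> \rank (map_mx cw (col_mx a b)) = 0%N.
Proof. by move=> -> ->; rewrite map_col_mx !map_cw_inj col_mx0 mxrank0. Qed.

Lemma construct n r (R : 'M[F0]_(r - 2, n)) (G1 : 'M[L]_(2, n)) (Yc : {set 'I_n}) :
  (4 <= r)%N ->
  mrank (col_mx G1 (inj R)) Yc = r ->
  (\rank (colrestr (NN L (map_mx c1 G1) (map_mx cw G1) R) Yc)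
     + \rank (colrestr R (~: Yc)) <= r + 1)%N ->
  exists Y3 : 'M[L]_(2, n), (col_mx Y3 (inj R) == col_mx G1 (inj R))%MS /\
     (\rank (colrestr R (~: Yc)) + \rank (colrestr (map_mx cw Y3) Yc) <= 1)%N.
Proof.
move=> r4 rGZ hrho.
set G := col_mx G1 (inj R).
set P0 := map_mx c1 G1; set Q0 := map_mx cw G1.
have hG1 : G1 = inj P0 + w *: inj Q0 by rewrite recon.
set PZ := colrestr P0 Yc; set QZ := colrestr Q0 Yc; set RZ := colrestr R Yc.
have hNN : colrestr (NN L P0 Q0 R) Yc = inj (col_mx (col_mx PZ QZ) RZ).
  by rewrite /NN !colrestr_col !colrestr_inj !inj_col.
have hG1Z : colrestr G1 Yc = inj PZ + w *: inj QZ.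
  by rewrite {1}hG1 colrestrD colrestrZ !colrestr_inj.
have hGZ : colrestr G Yc = col_mx (inj PZ + w *: inj QZ) (inj RZ).
  by rewrite colrestr_col hG1Z colrestr_inj.
have rGZ' : \rank (colrestr G Yc) = r := rGZ.
set rho := \rank (col_mx (col_mx PZ QZ) RZ).
set rY := \rank (colrestr R (~: Yc)).
have hrho' : (rho + rY <= r + 1)%N by rewrite /rho -(inj_rank L) -hNN.
have rR : (\rank R <= r - 2)%N by apply: rank_leq_row.
have rRZ : \rank RZ = (r - 2)%N.
  apply/eqP; rewrite eqn_leq (leq_trans (mxrankM_maxl _ _) rR) /=.
  have := rank_col_le (inj PZ + w *: inj QZ) (inj RZ); rewrite -hGZ rGZ' inj_rank => h.
  exact: (ar1 h (rank_leq_row _)).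
have injsub : forall k (M : 'M[F0]_(k, n)) (A : 'M[F0]_(k, n)), True by [].
have rho_ge : (r <= rho)%N.
  rewrite -rGZ' /rho -(inj_rank L) !inj_col hGZ; apply: mxrankS.
  rewrite col_mx_sub sub_colmxr andbT; apply: addmx_sub.
    exact: submx_trans (sub_colmxl _ _) (sub_colmxl _ _).
  by apply: scalemx_sub; exact: submx_trans (sub_colmxr _ _) (sub_colmxl _ _).
have hst : (rho < \rank RZ + (2 + 2))%N by rewrite rRZ; exact: ar2 r4 hrho'.
have [alpha [a0 [f [hf [z hz]]]]] := step hdim hgen hst.
set y1 := alpha *m G1 - w *: inj (z *m R).
have hy1Z : colrestr y1 Yc = inj f.
  by rewrite /y1 colrestrD colrestrN colrestrM hG1Z colrestrZ colrestr_inj colrestrM hz addrK.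
have [j aj] : exists j, alpha 0 j != 0.
  case: (pickP (fun j => alpha 0 j != 0)) => [j aj|h0]; first by exists j.
  by case/eqP: a0; apply/rowP => j; move/negbFE: (h0 j) => /eqP ->; rewrite mxE.
set j' := lift j (ord0 : 'I_1).
set y2 := row j' G1.
set Y2 := col_mx y1 y2.
set Sp2 := col_mx Y2 (inj R).
have y1Sp2 : (y1 <= Sp2)%MS by exact: (submx_trans (sub_colmxl y1 y2) (sub_colmxl _ _)).
have y2Sp2 : (y2 <= Sp2)%MS by exact: (submx_trans (sub_colmxr y1 y2) (sub_colmxl _ _)).
have RSp2 : (inj R <= Sp2)%MS by apply: sub_colmxr.
have G1R : (G1 <= G)%MS by apply: sub_colmxl.
have RG : (inj R <= G)%MS by apply: sub_colmxr.
have zRsub : forall (X : 'M[L]_(r - 2 + 2, n)) (zz : 'rV[F0]_(r - 2)), True by [].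
have other : forall i, i != j -> (row i G1 <= Sp2)%MS.
  move=> i; case: (unliftP j i) => [k ->|->]; last by rewrite eqxx.
  by move=> _; rewrite (ord1 k).
have aG1 : (alpha *m G1 <= Sp2)%MS.
  have -> : alpha *m G1 = y1 + w *: inj (z *m R) by rewrite /y1 subrK.
  apply: addmx_sub => //; apply: scalemx_sub; rewrite inj_mul.
  by apply: submx_trans (submxMl _ _) RSp2.
have G1Sp2 : (G1 <= Sp2)%MS.
  apply/row_subP => i; case: (eqVneq i j) => [->|]; last exact: other.
  have e := mulmx_sum_row alpha G1; rewrite (bigD1 j) //= in e.
  have : (alpha 0 j *: row j G1 <= Sp2)%MS.
    have -> : alpha 0 j *: row j G1 = alpha *m G1 - \sum_(i | i != j) alpha 0 i *: row i G1.
      by rewrite e addrK.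
    apply: subB_sub => //; apply: summx_sub => i0 ij; apply: scalemx_sub; exact: other ij.
  move/(scalemx_sub (alpha 0 j)^-1); by rewrite scalerA mulVf // scale1r.
have Sp2G : (Sp2 <= G)%MS.
  rewrite /Sp2 /Y2 col_mx_sub RG andbT col_mx_sub; apply/andP; split.
    apply: subB_sub; first by apply: submx_trans (submxMl _ _) G1R.
    by apply: scalemx_sub; rewrite inj_mul; apply: submx_trans (submxMl _ _) RG.
  by apply: submx_trans (row_sub _ _) G1R.
have eq2 : (Sp2 == G)%MS.
  by apply/andP; split => //; rewrite /G col_mx_sub G1Sp2 RSp2.
case: (leqP rho r) => hrr; last first.
  exists Y2; split => //.
  have -> : rY = 0%N by exact: ar3 hrr hrho'.
  rewrite add0n colrestr_map /Y2 (colrestr_col y1 y2).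
  exact: rank_map_col1 hy1Z.
have GSp2 : (G <= Sp2)%MS by case/andP: eq2.
set pZ := row j' PZ; set qZ := row j' QZ.
have hy2Z : colrestr y2 Yc = inj pZ + w *: inj qZ.
  rewrite /y2 rowE colrestrM -rowE hG1Z /pZ /qZ !rowE mulmxDr -scalemxAr.
  by rewrite -!rowE -!map_row.
set D := col_mx f RZ.
have rD : (r - 1 <= \rank D)%N.
  have h1 : (colrestr G Yc <= col_mx (col_mx (inj f) (colrestr y2 Yc)) (inj RZ))%MS.
    have := colrestr_submx Yc GSp2.
    by rewrite /Sp2 /Y2 (colrestr_col (col_mx y1 y2) (inj R)) (colrestr_col y1 y2) hy1Z colrestr_inj.
  have := mxrankS h1; rewrite rGZ' => h2.
  have := rank_col3 (inj f) (colrestr y2 Yc) (inj RZ).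
  rewrite -inj_col inj_rank -/D => h3.
  exact: (ar4 h2 h3 (rank_leq_row _)).
have rho2 : (\rank (col_mx (col_mx pZ qZ) D) <= rho)%N.
  apply: mxrankS; rewrite /D !col_mx_sub sub_colmxr !andbT.
  rewrite (submx_trans hf (sub_colmxl _ _)) andbT.
  rewrite (submx_trans (row_sub _ _) (submx_trans (sub_colmxl PZ QZ) (sub_colmxl _ _))) /=.
  by rewrite (submx_trans (row_sub _ _) (submx_trans (sub_colmxr PZ QZ) (sub_colmxl _ _))).
have hst2 : (\rank (col_mx (col_mx pZ qZ) D) < \rank D + (1 + 1))%N by exact: ar5 r4 rho2 hrr rD.
have [beta [b0 [f2 [hf2 [z2 hz2]]]]] := step hdim hgen hst2.
set z2a := lsubmx z2; set z2b := rsubmx z2.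
have hzD : z2 *m D = z2a *m f + z2b *m RZ by rewrite -{1}(hsubmxK z2) /D mul_row_col.
set y2' := beta *m y2 - w *: (inj z2a *m y1 + inj (z2b *m R)).
have hy2'Z : colrestr y2' Yc = inj f2.
  rewrite /y2' colrestrD colrestrN colrestrM hy2Z hz2 colrestrZ colrestrD colrestrM hy1Z.
  by rewrite colrestr_inj colrestrM hzD inj_add !inj_mul addrK.
set Y3 := col_mx y1 y2'.
set Sp3 := col_mx Y3 (inj R).
have y1Sp3 : (y1 <= Sp3)%MS by exact: (submx_trans (sub_colmxl y1 y2') (sub_colmxl _ _)).
have y2'Sp3 : (y2' <= Sp3)%MS by exact: (submx_trans (sub_colmxr y1 y2') (sub_colmxl _ _)).
have RSp3 : (inj R <= Sp3)%MS by apply: sub_colmxr.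
have comb : ((inj z2a *m y1 + inj (z2b *m R))%R <= Sp3)%MS.
  have h1 := submx_trans (submxMl (inj z2a) y1) y1Sp3. have h2 : (inj (z2b *m R) <= Sp3)%MS by rewrite inj_mul; apply: submx_trans (submxMl _ _) RSp3. exact: (addmx_sub h1 h2).
have b00 : beta 0 0 != 0.
  by apply: contraNneq b0 => h; rewrite [beta]mx11_scalar h; apply/eqP/rowP => k; rewrite !mxE mul0rn.
have y2Sp3 : (y2 <= Sp3)%MS.
  have : (beta 0 0 *: y2 <= Sp3)%MS.
    rewrite -mul_scalar_mx -mx11_scalar.
    have -> : beta *m y2 = y2' + w *: (inj z2a *m y1 + inj (z2b *m R)) by rewrite /y2' subrK.
    by apply: addmx_sub => //; apply: scalemx_sub.
  move/(scalemx_sub (beta 0 0)^-1); by rewrite scalerA mulVf // scale1r.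
have Sp2Sp3 : (Sp2 <= Sp3)%MS.
  by rewrite /Sp2 /Y2 !col_mx_sub y1Sp3 y2Sp3 RSp3.
have y1G : (y1 <= G)%MS by apply: submx_trans y1Sp2 Sp2G.
have y2G : (y2 <= G)%MS by apply: submx_trans y2Sp2 Sp2G.
have Sp3G : (Sp3 <= G)%MS.
  rewrite /Sp3 /Y3 !col_mx_sub y1G RG andbT /=.
  apply: subB_sub; first exact: submx_trans (submxMl _ _) y2G.
  apply: scalemx_sub; apply: addmx_sub; first exact: submx_trans (submxMl _ _) y1G.
  by rewrite inj_mul; apply: submx_trans (submxMl _ _) RG.
exists Y3; split.
  by apply/andP; split => //; apply: submx_trans GSp2 Sp2Sp3.
rewrite colrestr_map /Y3 (colrestr_col y1 y2') (rank_map_col0 hy1Z hy2'Z) addn0.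
exact: ar6 rho_ge hrho'.
Qed.
End M.


Lemma ar7 a b r x y kk : (a <= 2 + x -> b <= y -> x + y <= r + 1 -> 4 <= kk -> kk <= b ->
  r <= a + b -> b <= r -> ~ ((a + b - r).+1 <= minn a b) -> b = r)%N.
Proof. move=> *; lia. Qed.
Lemma ar8 a b r x y : (a <= 2 + x -> b <= y -> x + y <= r + 1 -> (a + b - r).+1 <= 5)%N.
Proof. lia. Qed.
Lemma ar9 a b c x y R r : (4 + x <= a -> y <= b -> c <= 4 + R -> R <= r - 2 -> 4 <= r ->
  a + b - c < 4 -> x + y <= r + 1)%N.
Proof. lia. Qed.
Lemma ar10 a b c : (b <= c -> a <= 4 -> a + b - c <= 4)%N.
Proof. lia. Qed.

Section K.
Variables (F0 : fieldType) (L : fieldExtType F0) (w : L).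
Hypothesis hdim : \dim {:L} = 2%N.
Hypothesis hgen : <<1%VS; w>>%VS = fullv.
Notation cw := (cw w).
Notation c1 := (c1 w).
Notation inj := (inj_mx L).

Lemma mlam_S6 r n (P Q : 'M[F0]_(2, n)) (R : 'M[F0]_(r - 2, n)) :
  (mlambda (Wplus w P Q R) (S6 n) <= 4)%N.
Proof.
rewrite /mlambda; apply: ar10; first exact: mrank_rank.
rewrite /mrank WplusE colrestr_row.
have -> : [set j | lshift n j \in S6 n] = setT.
  by apply/setP => j; rewrite !inE /= ltn_ord.
have -> : [set k | rshift (4 + 2) k \in S6 n] = set0.
  by apply/setP => k; rewrite !inE /= ltnNge leq_addr.
rewrite colrestrT colrestr0 rank_row_mx0.
by apply: leq_trans (rank_col_le _ _) _; rewrite mxrank0 addn0 rank_leq_row.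
Qed.

Lemma kappa_fail n r (R : 'M[F0]_(r - 2, n)) (G1 : 'M[L]_(2, n)) m (A : 'M[L]_(m, n))
  (d : 'rV[L]_n) (K : {set 'I_n}) :
  (forall j, d 0 j != 0) ->
  (A == col_mx G1 (inj R) *m diag_mx d)%MS -> \rank A = r -> (4 <= r)%N ->
  vert_conn A 5 -> (4 <= mrank A K)%N ->
  mkappa (Wplus w (map_mx c1 G1) (map_mx cw G1) R) (S6 n)
     [set rshift (4 + 2) k | k in K] != 4%N ->
  exists Yc : {set 'I_n}, mrank (col_mx G1 (inj R)) Yc = r /\
    (\rank (colrestr (NN L (map_mx c1 G1) (map_mx cw G1) R) Yc)
     + \rank (colrestr R (~: Yc)) <= r + 1)%N.
Proof.
move=> hd hA rA r4 hconn hK hk.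
set G := col_mx G1 (inj R).
set P0 := map_mx c1 G1; set Q0 := map_mx cw G1.
set W := Wplus w P0 Q0 R.
set KS := [set rshift (4 + 2) k | k in K].
have hmr : forall X, mrank A X = mrank G X.
  by move=> X; rewrite (mrank_eqmx X hA) mrank_diag.
have [Z /and3P [sZ zK lZ]] : exists Z : {set 'I_((4 + 2) + n)},
    [&& S6 n \subset Z, Z \subset ~: KS & mlambda W Z < 4]%N.
  apply/existsP; apply: contraNT hk; rewrite negb_exists => /forallP hall.
  have S6K : S6 n \subset ~: KS.
    apply/subsetP => j; rewrite !inE => hj; apply/imsetP => [[k _ hk']].
    by move: hj; rewrite hk' /= ltnNge leq_addr.
  have l4 : (4 <= mlambda W (S6 n))%N.
    by move: (hall (S6 n)); rewrite S6K subxx /= -leqNgt.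
  have ge4 : (4 <= mkappa W (S6 n) KS)%N.
    rewrite /mkappa; apply: (big_ind (fun x => 4 <= x)%N) => //.
      by move=> x y hx hy; rewrite leq_min hx hy.
    by move=> Z /andP [h1 h2]; move: (hall Z); rewrite h1 h2 /= -leqNgt.
  have le4 : (mkappa W (S6 n) KS <= 4)%N.
    rewrite /mkappa; apply: (@leq_trans (mlambda W (S6 n))); last exact: mlam_S6.
    apply: (big_rec (fun x => x <= mlambda W (S6 n))%N) => // i x _ hx.
    by rewrite geq_min hx orbT.
  by apply/eqP; apply/eqP; rewrite eqn_leq le4 ge4.
set Y := [set k | rshift (4 + 2) k \in Z].
exists (~: Y); rewrite setCK.
have w1 := W1 w P0 Q0 R sZ.
have w2 := W2 w P0 Q0 R sZ.
have w3 := W3 w P0 Q0 R.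
have hx : (\rank (colrestr R Y) + \rank (colrestr (NN L P0 Q0 R) (~: Y)) <= r + 1)%N.
  exact: (ar9 w1 w2 w3 (rank_leq_row R) r4 lZ).
split; last by rewrite addnC.
have hG1 : G1 = inj P0 + w *: inj Q0 by rewrite recon.
have GN : (G <= NN L P0 Q0 R)%MS.
  rewrite /G /NN !col_mx_sub sub_colmxr andbT {1}hG1.
  apply: addmx_sub; first exact: submx_trans (sub_colmxl _ _) (sub_colmxl _ _).
  by apply: scalemx_sub; exact: submx_trans (sub_colmxr _ _) (sub_colmxl _ _).
have hb : (mrank G (~: Y) <= \rank (colrestr (NN L P0 Q0 R) (~: Y)))%N.
  exact: mxrankS (colrestr_submx _ GN).
have ha : (mrank G Y <= 2 + \rank (colrestr R Y))%N.
  rewrite /mrank /G colrestr_col colrestr_inj.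
  apply: leq_trans (rank_col_le _ _) _.
  by rewrite inj_rank leq_add2r rank_leq_row.
have KY : K \subset ~: Y.
  apply/subsetP => k kK; rewrite !inE; apply/negP => kZ.
  have : rshift (4 + 2) k \in ~: KS by apply: (subsetP zK).
  by rewrite inE; move/negP; apply; apply/imsetP; exists k.
have hKY := mrank_le A KY.
have hsp := mrank_split A Y.
have hrk := mrank_rank A (~: Y).
rewrite -hmr in ha; rewrite -hmr in hb; rewrite rA in hsp hrk.
have hsep := hconn _ (ar8 ha hb hx) Y.
rewrite -hmr; apply: (ar7 ha hb hx hK hKY hsp hrk) => hle; apply: hsep.
by rewrite /vert_sep /mlambda rA.
Qed.
End K.


Lemma eqmx_trans' (K : fieldType) m1 m2 m3 n (A : 'M[K]_(m1, n)) (B : 'M[K]_(m2, n)) (C : 'M[K]_(m3, n)) :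
  (A == B)%MS -> (B == C)%MS -> (A == C)%MS.
Proof.
case/andP => h1 h2; case/andP => h3 h4; apply/andP; split; [exact: submx_trans h1 h3 | exact: submx_trans h4 h2].
Qed.

Lemma eqmx_sym' (K : fieldType) m1 m2 n (A : 'M[K]_(m1, n)) (B : 'M[K]_(m2, n)) :
  (A == B)%MS -> (B == A)%MS.
Proof. by case/andP => h1 h2; apply/andP. Qed.

Theorem lemma8p1 (F0 : fieldType) (L : fieldExtType F0) (w : L)
  (hdim : \dim {:L} = 2%N) (hgen : <<1%VS; w>>%VS = fullv)
  (m n r : nat) (A : 'M[L]_(m, n)) (hr : \rank A = r)
  (hconn : vert_conn A 5) (e : 'I_n) (he : nonloop A e)
  (u0 v0 : 'rV[F0]_n) (R : 'M[F0]_(r - 2, n))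
  (hcon : mapprox (pcontract A e)
            (col_mx (inj_mx L u0 + w *: inj_mx L v0) (inj_mx L R))) :
  exists P Q : 'M[F0]_(2, n),
    mapprox A (stackPQR w P Q R) /\
    ((exists I : {set 'I_n},
        (\rank (colrestr R I) + \rank (colrestr Q (~: I)) <= 1)%N)
     \/
     (forall K : {set 'I_n}, (4 <= mrank A K)%N ->
        mkappa (Wplus w P Q R) [set j : 'I_((4 + 2) + n) | (j < 4 + 2)%N]
               [set rshift (4 + 2) k | k in K] = 4%N)).
Proof.
have [i0 hi0] : exists i, A i e != 0.
  case: (boolP [exists i, A i e != 0]) => [/existsP //| /existsPn h0].
  exfalso; move: he; rewrite /nonloop /mrank.
  have -> : colrestr A [set e] = 0.
    apply/matrixP => i j; rewrite colrestrE !mxE inE.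
    by case: eqP => [->|//]; move/negbNE/eqP: (h0 i).
  by rewrite mxrank0.
case: hcon => d [hd hB].
set x := inj_mx L u0 + w *: inj_mx L v0.
set B := col_mx x (inj_mx L R).
set a := row i0 A.
set a0 := a *m diag_mx (\row_j (d 0 j)^-1).
have ha0 : a0 *m diag_mx d = a.
  apply/rowP => j; rewrite /a0 !mul_mx_diag !mxE -mulrA mulVf ?mulr1 //.
pose G1 := col_mx x a0.
set G := col_mx G1 (inj_mx L R).
have pcA : (pcontract A e <= A)%MS.
  by apply/row_subP => i; move: (row_sub i (pcontract A e)); rewrite pcontractP => /andP [].
have BdA : (B *m diag_mx d <= A)%MS.
  by case/andP: hB => _ h; apply: submx_trans h pcA.
have hGd : G *m diag_mx d = col_mx (col_mx (x *m diag_mx d) a) (inj_mx L R *m diag_mx d).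
  by rewrite /G /G1 !mul_col_mx ha0.
have hBd : B *m diag_mx d = col_mx (x *m diag_mx d) (inj_mx L R *m diag_mx d).
  by rewrite /B mul_col_mx.
have BdG : (B *m diag_mx d <= G *m diag_mx d)%MS.
  rewrite hBd hGd col_mx_sub sub_colmxr andbT.
  exact: submx_trans (sub_colmxl _ _) (sub_colmxl _ _).
have hG : (A == G *m diag_mx d)%MS.
  apply/andP; split.
    apply/row_subP => i.
    set c := A i e / A i0 e.
    have -> : row i A = (row i A - c *: a) + c *: a by rewrite subrK.
    apply: addmx_sub; last first.
      apply: scalemx_sub; rewrite hGd.
      exact: submx_trans (sub_colmxr _ _) (sub_colmxl _ _).
    apply: submx_trans BdG; case/andP: hB => h _; apply: submx_trans h.
    rewrite pcontractP; apply/andP; split.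
      by apply: subB_sub; [exact: row_sub | apply: scalemx_sub; exact: row_sub].
    by rewrite !mxE /c divfK // subrr.
  rewrite hGd !col_mx_sub row_sub andbT.
  move: BdA; rewrite hBd col_mx_sub => /andP [-> ->] //.
set P0 := map_mx (c1 w) G1; set Q0 := map_mx (cw w) G1.
have hstack : stackPQR w P0 Q0 R = G by rewrite /stackPQR recon.
have rG : \rank A = \rank G.
  by rewrite -(colrestrT A) -(colrestrT G) -/(mrank A setT) (mrank_eqmx _ hG) mrank_diag.
case: (leqP r 3) => r3.
  exists P0, Q0; split; first by exists d; split => //; rewrite hstack.
  left; exists setT; rewrite colrestrT setCT colrestr0 mxrank0 addn0.
  by apply: leq_trans (rank_leq_row R) _; rewrite leq_subLR.
have r4 : (4 <= r)%N by [].
case: (classic (forall K : {set 'I_n}, (4 <= mrank A K)%N ->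
        mkappa (Wplus w P0 Q0 R) [set j : 'I_((4 + 2) + n) | (j < 4 + 2)%N]
               [set rshift (4 + 2) k | k in K] = 4%N)) => h2.
  by exists P0, Q0; split; [exists d; split => //; rewrite hstack | right].
have [K hK] := not_all_ex_not _ _ h2.
have [hK4 hK5] := imply_to_and _ _ hK.
have [Yc [hYc hrk]] := kappa_fail hdim hgen hd hG hr r4 hconn hK4 (introN eqP hK5).
have [Y3 [eqY hY3]] := construct hdim hgen r4 hYc hrk.
exists (map_mx (c1 w) Y3), (map_mx (cw w) Y3); split.
  exists d; split => //; rewrite /stackPQR (recon hdim hgen).
  apply: eqmx_trans' hG _; apply/andP; split; apply: submxMr; case/andP: eqY => //.
left; exists (~: Yc); rewrite setCK; exact: hY3.
Qed.
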